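(* Let $X$ be a compact metric space and $f\colon X\to X$ an $n$-expansive homeomorphism with the shadowing property. Then $CR(f)=\overline{Per(f)}$.
   Context: $f$ is $n$-expansive if there is $c>0$ such that for every $x\in X$ the set $\{y: d(f^k(y),f^k(x))\leq c \ \forall k\in\mathbb{Z}\}$ has at most $n$ points. $f$ has the shadowing property if for every $\varepsilon>0$ there is $\delta>0$ such that for every $(x_k)_{k\in\mathbb{Z}}$ with $d(f(x_k),x_{k+1})<\delta$ for all $k$ there is $y$ with $d(f^k(y),x_k)<\varepsilon$ for all $k$. $Per(f)$ is the set of periodic points. A finite $\varepsilon$-pseudo orbit is $(x_k)_{k=0}^l$ with $d(f(x_k),x_{k+1})<\varepsilon$; $x$ is chain recurrent if for each $\varepsilon>0$ there is a nontrivial finite $\varepsilon$-pseudo orbit starting and ending at $x$; $CR(f)$ is the set of chain recurrent points. *)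

(* Defs.v *)
From HB Require Import structures.
From mathcomp Require Import all_boot all_order all_algebra.
From mathcomp Require Import all_classical all_reals all_analysis.
Set Implicit Arguments. Unset Strict Implicit. Unset Printing Implicit Defensive.
Import Order.TTheory GRing.Theory Num.Theory.
Local Open Scope classical_set_scope.
Local Open Scope ring_scope.

Section Dyn.
Context {R : realType} {X : metricType R}.

(* integer iterate f^k of a homeomorphism f with inverse g:
   f^n for k = n >= 0, g^(n+1) = f^(-(n+1)) for k = Negz n *)
Definition zit (f g : X -> X) (k : int) : X -> X :=
  match k with
  | Posz n => iter n f
  | Negz n => iter n.+1 g
  end.

Definition is_homeomorphism (f g : X -> X) : Prop :=
  cancel f g /\ cancel g f /\ continuous f /\ continuous g.

Definition n_expansive (n : nat) (f g : X -> X) : Prop :=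
  exists2 c : R, 0 < c &
    forall x : X, forall s : seq X, uniq s ->
      (forall y, y \in s -> forall k : int,
          mdist (zit f g k y) (zit f g k x) <= c) ->
      (size s <= n)%N.

Definition shadowing (f g : X -> X) : Prop :=
  forall eps : R, 0 < eps -> exists2 delta : R, 0 < delta &
    forall xs : int -> X,
      (forall k : int, mdist (f (xs k)) (xs (k + 1)) < delta) ->
      exists y : X, forall k : int, mdist (zit f g k y) (xs k) < eps.

Definition Per (f : X -> X) : set X :=
  [set x | exists2 m : nat, (0 < m)%N & iter m f x = x].

Definition CR (f : X -> X) : set X :=
  [set x | forall eps : R, 0 < eps ->
     exists l : nat, exists xs : nat -> X,
       [/\ (0 < l)%N, xs 0%N = x, xs l = x &
           forall i : nat, (i < l)%N -> mdist (f (xs i)) (xs i.+1) < eps]].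

End Dyn.

(* Main.v *)
Require Import Defs.
From HB Require Import structures.
From mathcomp Require Import all_boot all_order all_algebra.
From mathcomp Require Import all_classical all_reals all_analysis.
From mathcomp Require Import zify.
Import Order.TTheory GRing.Theory Num.Theory.
Local Open Scope classical_set_scope.
Local Open Scope ring_scope.

Section Helpers.
Context {R : realType} {X : metricType R}.
Implicit Types (f g : X -> X).

Lemma zitS f g (fK : cancel f g) (k : int) (y : X) :
  zit f g k (f y) = zit f g (k + 1) y.
Proof.
case: k => n.
- have -> : Posz n + 1 = Posz n.+1 by rewrite -addn1 PoszD.
  exact: (esym (iterSr _ _ _)).
- case: n => [|m].
  + have -> : Negz 0 + 1 = 0 by [].
    by rewrite /= fK.
  + have -> : Negz m.+1 + 1 = Negz m by rewrite !NegzE; lia.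
    by rewrite /zit iterSr fK.
Qed.

Lemma zit_iter f g (fK : cancel f g) (m : nat) (k : int) (y : X) :
  zit f g k (iter m f y) = zit f g (k + m%:Z) y.
Proof.
elim: m k y => [|m IH] k y; first by rewrite addr0.
rewrite iterSr IH zitS //; congr zit; rewrite -addrA; congr (_ + _).
by rewrite -addn1 PoszD addrC.
Qed.

Lemma cont_ball f x e : continuous f -> 0 < e ->
  exists2 d, 0 < d & forall y, mdist x y < d -> mdist (f x) (f y) < e.
Proof.
move=> cf e0.
have := cf x (ball (f x) e) (nbhsx_ballx _ _ e0).
move=> /nbhs_ballP [d /= d0 H]; exists d => // y xy.
have := H y; rewrite ballEmdist /=.
move=> /(_ xy); by rewrite ballEmdist.
Qed.

End Helpers.

Theorem proposition2p3 (R : realType) (X : metricType R) (n : nat)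
    (f g : X -> X) :
  compact [set: X] ->
  is_homeomorphism f g ->
  n_expansive n f g ->
  shadowing f g ->
  CR f = closure (Per f).
Proof.
move=> _ [fK [gK [cf cg]]] [c c0 hexp] hsh.
apply/seteqP; split => x.
-
  move=> xCR B /nbhs_ballP [e /= e0 He].
  pose eps := Num.min e (c / 2).
  have eps0 : 0 < eps by rewrite lt_min e0 divr_gt0.
  have [delta delta0 hd] := hsh eps eps0.
  have [l [xs [l0 xs0 xsl hxs]]] := xCR delta delta0.
  pose ps (k : int) : X := xs `|(k %% l%:Z)%Z|%N.
  have hpsP : forall (k : int) (j : nat), ps (k + (j * l)%N%:Z) = ps k.
    move=> k j; rewrite /ps; congr (xs _); congr absz.
    by rewrite PoszM addrC modzMDl.
  have hps0 : ps 0 = x by rewrite /ps mod0z.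
  have hpsD : forall k, mdist (f (ps k)) (ps (k + 1)) < delta.
    move=> k; rewrite /ps.
    have ki : ((k %% l%:Z)%Z) = `|(k %% l%:Z)%Z|%N%:Z by rewrite gez0_abs //; lia.
    have il : (`|(k %% l%:Z)%Z| < l)%N.
      have : ((k %% l%:Z)%Z < l%:Z) by rewrite ltz_pmod // ltz_nat.
      by rewrite ki ltz_nat.
    move: ki il; set i := `|(k %% l%:Z)%Z|%N => ki il.
    have -> : ((k + 1) %% l%:Z)%Z = ((i%:Z + 1) %% l%:Z)%Z by rewrite -ki modzDml.
    have [il1 | il1] := ltnP i.+1 l.
      rewrite modz_small; last by lia.
      have -> : absz (i%:Z + 1)%R = i.+1 by lia.
      exact: hxs.
    have il2 : i.+1 = l by apply/eqP; rewrite eqn_leq il1 il.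
    have -> : ((i%:Z + 1) %% l%:Z)%Z = 0.
      by rewrite -il2 -addn1 PoszD modzz.
    rewrite /= xs0 -xsl -il2; exact: hxs.
  have [y hy] := hd ps hpsD.
  pose s := [seq iter (j * l)%N f y | j <- iota 0 n.+1].
  have hclose : forall y', y' \in s -> forall k : int,
      mdist (zit f g k y') (zit f g k y) <= c.
    move=> y' /mapP [j _ ->] k.
    rewrite zit_iter //.
    apply: ltW; apply: (le_lt_trans (metric_triangle _ (ps k) _)).
    have e1 := hy (k + (j * l)%N%:Z); rewrite hpsP in e1.
    have e2 := hy k; rewrite metric_sym in e2.
    have -> : c = c / 2 + c / 2 by rewrite -splitr.
    have hec : eps <= c / 2 by rewrite ge_min lexx orbT.
    by apply: ltrD; apply: (lt_le_trans _ hec).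
  have : ~~ uniq s.
    apply/negP => us; have := hexp y s us hclose.
    by rewrite size_map size_iota ltnn.
  move=> /(uniqPn y) [i [j [ij js hij]]].
  rewrite size_map size_iota in js.
  move: hij; rewrite !(nth_map 0%N) ?size_iota //; last exact: ltn_trans ij js.
  rewrite !nth_iota //; last exact: ltn_trans ij js.
  rewrite !add0n => hij.



  exists (iter (i * l) f y); split; last first.
    apply: He; rewrite ballEmdist /= metric_sym.
    have := hy (0 + (i * l)%N%:Z); rewrite hpsP hps0 add0r /= => h.
    by apply: (lt_le_trans h); rewrite ge_min lexx.
  exists ((j - i) * l)%N.
    by rewrite muln_gt0 subn_gt0 ij l0.
  rewrite -iterD -mulnDl subnK ?(ltnW ij) //.
-
  move=> xcl eps eps0.
  have eps20 : 0 < eps / 2 by rewrite divr_gt0.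
  have [d d0 hd] := @cont_ball _ _ f x (eps/2) cf eps20.
  have md0 : 0 < Num.min d (eps / 2) by rewrite lt_min d0.
  have [p [[m m0 pm] /=]] := xcl _ (nbhsx_ballx x _ md0).
  rewrite ballEmdist /= lt_min => /andP [xpd xpe].
  exists m; exists (fun i => if i == 0%N then x else if i == m then x else iter i f p).
  split => //.
    by rewrite eqxx; case: (m == 0%N).
  move=> i im.
  have hA : mdist (f (if i == 0%N then x else if i == m then x else iter i f p))
               (f (iter i f p)) < eps / 2.
    case: eqP => [-> | _]; first exact: hd.
    by rewrite (ltn_eqF im) mdistxx.
  have hB : mdist (iter i.+1 f p)
     (if i.+1 == 0%N then x else if i.+1 == m then x else iter i.+1 f p) < eps / 2.
    have -> : (i.+1 == 0%N) = false by [].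
    case: eqP => [e | _]; last by rewrite mdistxx.
    by rewrite e pm metric_sym.
  rewrite (le_lt_trans (metric_triangle _ (f (iter i f p)) _)) //.
  by rewrite [eps]splitr ltrD // -iterS.
Qed.
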